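(* Let $\mathcal{Z}$ be a data space with unknown distribution $\mu$, let $S=(Z_1,\dots,Z_n)$ have i.i.d. entries $Z_i\sim\mu$, let $\mathcal{W}$ be a hypothesis class, and let the learning algorithm be a Markov kernel $P_{W|S}$ producing a hypothesis $W\in\mathcal{W}$. Write $P_W$ for the marginal of $W$ and $P_{W,Z_i}$ for the joint distribution of $(W,Z_i)$, $i=1,\dots,n$. Let $l:\mathcal{W}\times\mathcal{Z}\to\mathbb{R}^+$ be a loss function. For each $i=1,\dots,n$ let $\widehat{P}_{W,Z_i}$ be an auxiliary joint distribution on $\mathcal{W}\times\mathcal{Z}$, and let $\Lambda_{l(W,Z_i)}(\lambda)=\log \mathbb{E}_{\widehat{P}_{W,Z_i}}\big[e^{\lambda(l(W,Z_i)-\mathbb{E}_{\widehat{P}_{W,Z_i}}[l(W,Z_i)])}\big]$ be the cumulant generating function of $l(W,Z_i)$ under $\widehat{P}_{W,Z_i}$. Assume that for every $i=1,\dots,n$, $\Lambda_{l(W,Z_i)}(\lambda)$ exists, $\Lambda_{l(W,Z_i)}(\lambda)\le\psi_+(\lambda)$ for all $\lambda\in[0,b_+)$ with $0<b_+<+\infty$, and $\Lambda_{l(W,Z_i)}(\lambda)\le\psi_-(-\lambda)$ for all $\lambda\in(b_-,0]$ (with $b_-<0$), where $\psi_+$ and $\psi_-$ are convex functions satisfying $\psi_-(0)=\psi_+(0)=\psi_+'(0)=\psi_-'(0)=0$. Define $\psi_+^{\star-1}(x)=\inf_{\lambda\in(0,b_+)}\frac{x+\psi_+(\lambda)}{\lambda}$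 and $\psi_-^{\star-1}(x)=\inf_{\lambda\in(0,-b_-)}\frac{x+\psi_-(\lambda)}{\lambda}$, and set $A_i=KL(P_W\otimes\mu\,\|\,\widehat{P}_{W,Z_i})$ and $B_i=KL(P_{W,Z_i}\,\|\,\widehat{P}_{W,Z_i})$. Then $$\overline{\text{gen}}(P_{W|S},\mu)\le\frac1n\sum_{i=1}^n\big(\psi_+^{\star-1}(A_i)+\psi_-^{\star-1}(B_i)\big),\qquad -\overline{\text{gen}}(P_{W|S},\mu)\le\frac1n\sum_{i=1}^n\big(\psi_-^{\star-1}(A_i)+\psi_+^{\star-1}(B_i)\big).$$
   Context: Population risk: $L_P(w,\mu)=\int_{\mathcal{Z}} l(w,z)\,\mu(dz)$. Empirical risk: $L_E(w,S)=\frac1n\sum_{i=1}^n l(w,Z_i)$. Expected generalization error: $\overline{\text{gen}}(P_{W|S},\mu)=\mathbb{E}_{P_{W,S}}[L_P(W,\mu)-L_E(W,S)]$. $KL(P\|Q)=\int \log\frac{dP}{dQ}\,dP$ is the Kullback–Leibler divergence (natural logarithm). $P_W\otimes\mu$ denotes the product measure. *)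

(* Defs.v *)
From HB Require Import structures.
From mathcomp Require Import all_boot all_order all_algebra.
From mathcomp Require Import all_classical all_reals all_analysis.
Set Implicit Arguments. Unset Strict Implicit. Unset Printing Implicit Defensive.
Import Order.TTheory GRing.Theory Num.Theory.
Import numFieldNormedType.Exports.
Local Open Scope classical_set_scope.
Local Open Scope ring_scope.

Section pairmap.
Context {dO dW dZ : measure_display} {Om : measurableType dO}
  {Wt : measurableType dW} {Zt : measurableType dZ} {n : nat}.
Variables (W : {mfun Om >-> Wt}) (S : {mfun Om >-> n.-tuple Zt}) (i : 'I_n).
Definition WZ_pair (om : Om) : Wt * Zt := (W om, tnth (S om) i).
Lemma WZ_pair_measurable : measurable_fun [set: Om] WZ_pair.
Proof.
apply: measurable_fun_pair => //.
exact: (measurableT_comp (measurable_tnth i)).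
Qed.
HB.instance Definition _ := isMeasurableFun.Build _ _ _ _ WZ_pair
  WZ_pair_measurable.
End pairmap.

Section kl.
Context {d : measure_display} {T : measurableType d} {R : realType}.
Local Open Scope ereal_scope.
Local Open Scope charge_scope.
Definition KL (Pm Qm : probability T R) : \bar R :=
  if pselect (Pm `<< Qm) then
    \int[Pm]_x (ln (fine ('d (charge_of_finite_measure Pm) '/d Qm x)))%:E
  else +oo.
End kl.


Section cgf.
Context {d : measure_display} {T : measurableType d} {R : realType}.
Local Open Scope ereal_scope.
Definition mean (Pm : probability T R) (f : T -> R) : \bar R :=
  \int[Pm]_x (f x)%:E.
Definition cgf_exists (Pm : probability T R) (f : T -> R) (lam : R) : Prop :=
  Pm.-integrable [set: T] (fun x => (f x)%:E) /\
  Pm.-integrable [set: T]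
    (fun x => (expR (lam * (f x - fine (mean Pm f))))%:E).
Definition cgf (Pm : probability T R) (f : T -> R) (lam : R) : R :=
  ln (fine (\int[Pm]_x (expR (lam * (f x - fine (mean Pm f))))%:E)).
End cgf.

Section psi.
Context {R : realType}.
Local Open Scope ereal_scope.
Definition psi_star_inv (psi : R -> R) (b : \bar R) (x : \bar R) : \bar R :=
  ereal_inf [set (x + (psi lam)%:E) * (lam^-1)%:E |
             lam in [set lam : R | (0 < lam)%R /\ lam%:E < b]].
Definition convex_on_0b (psi : R -> R) (b : \bar R) : Prop :=
  forall x y t : R, (0 <= x)%R -> x%:E < b -> (0 <= y)%R -> y%:E < b ->
    (0 <= t <= 1)%R ->
    (psi (t * x + (1 - t) * y) <= t * psi x + (1 - t) * psi y)%R.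
(* psi'(0) = 0 (right derivative at 0, psi being defined on [0, b)) *)
Definition deriv0_zero (psi : R -> R) : Prop :=
  (fun h => (psi h - psi 0) / h)%R @ 0%R^'+ --> 0%R.
End psi.

Section learning.
Context {dO dW dZ : measure_display} {Om : measurableType dO}
  {Wt : measurableType dW} {Zt : measurableType dZ} {R : realType} {n : nat}.
Local Open Scope ereal_scope.
Definition iid_sample (P : probability Om R) (S : Om -> n.-tuple Zt)
    (mu : probability Zt R) : Prop :=
  forall A : 'I_n -> set Zt, (forall i, measurable (A i)) ->
    P [set om | forall i, A i (tnth (S om) i)] = \prod_(i < n) mu (A i).
(* the joint law of (S, W) is P_S (x) P_{W|S}, i.e. K is the learning
   algorithm (Markov kernel) producing W from S *)
Definition algorithm_kernel (P : probability Om R)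
    (S : {mfun Om >-> n.-tuple Zt}) (W : Om -> Wt)
    (K : R.-pker (n.-tuple Zt) ~> Wt) : Prop :=
  forall (A : set (n.-tuple Zt)) (B : set Wt), measurable A -> measurable B ->
    P (S @^-1` A `&` W @^-1` B) = \int[distribution P S]_(s in A) K s B.
Definition pop_risk (mu : probability Zt R) (l : Wt * Zt -> R) (w : Wt) : \bar R :=
  \int[mu]_z (l (w, z))%:E.
Definition emp_risk (l : Wt * Zt -> R) (w : Wt) (s : n.-tuple Zt) : R :=
  ((n%:R)^-1 * \sum_(i < n) l (w, tnth s i))%R.
Definition gen (P : probability Om R) (S : Om -> n.-tuple Zt) (W : Om -> Wt)
    (mu : probability Zt R) (l : Wt * Zt -> R) : \bar R :=
  \int[P]_om (pop_risk mu l (W om) - (emp_risk l (W om) (S om))%:E).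
End learning.

(* Main.v *)
Require Import Defs.
From HB Require Import structures.
From mathcomp Require Import all_boot all_order all_algebra.
From mathcomp Require Import all_classical all_reals all_analysis.
From mathcomp Require Import ring lra measurable_realfun.
Import Order.TTheory GRing.Theory Num.Theory.
Import numFieldNormedType.Exports.
Local Open Scope classical_set_scope.
Local Open Scope ring_scope.

Section DV.
Context {d : measure_display} {T : measurableType d} {R : realType}.

Lemma ln_le_sub1 (x : R) : 0 < x -> ln x <= x - 1.
Proof.
move=> x0; have := expR_ge1Dx (ln x); rewrite lnK ?posrE //; lra.
Qed.

Lemma key_ineq (q u c : R) : 0 <= q -> 0 < c ->
  q * (u - ln q - ln c + 1) <= expR u / c.
Proof.
move=> q0 c0; have [->|qn0] := eqVneq q 0.
  by rewrite mul0r divr_ge0 // ?expR_ge0 // ltW.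
have qp : 0 < q by rewrite lt_neqAle eq_sym qn0.
have h := expR_ge1Dx (u - ln q - ln c).
have E : expR (u - ln q - ln c) = expR u / q / c.
  by rewrite !expRD !expRN !lnK ?posrE.
rewrite E in h.
have : q * (1 + (u - ln q - ln c)) <= q * (expR u / q / c).
  by rewrite ler_pM2l.
have -> : q * (expR u / q / c) = expR u / c by field; rewrite qn0 gt_eqF.
move=> H; apply: le_trans H; lra.
Qed.

Lemma neg_ln_bound (q : R) : 0 <= q -> q * Num.max (- ln q) 0 <= 1.
Proof.
move=> q0; have [q1|q1] := leP 1 q.
  have : 0 <= ln q by apply: ln_ge0.
  move=> h; rewrite (_ : Num.max _ _ = 0) ?mulr0 //.
  by apply/max_idPr; lra.
have [->|qn0] := eqVneq q 0; first by rewrite mul0r.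
have qp : 0 < q by rewrite lt_neqAle eq_sym qn0.
have h := @ln_le_sub1 q^-1 (ltac:(by rewrite invr_gt0)).
rewrite lnV ?posrE // in h.
have lq : ln q < 0 by apply: ln_lt0; rewrite qp q1.
have -> : Num.max (- ln q) 0 = - ln q by apply/max_idPl; lra.
have : q * (- ln q) <= q * (q^-1 - 1) by rewrite ler_pM2l.
have -> : q * (q^-1 - 1) = 1 - q by field.
lra.
Qed.

Lemma maxpm (x : R) : Num.max x 0 - Num.max (- x) 0 = x.
Proof.
have [x0|x0] := leP 0 x; have [y0|y0] := leP 0 (- x); lra.
Qed.

Local Open Scope ereal_scope.
Local Open Scope charge_scope.

Lemma int_cstP (P : probability T R) (r : R) : \int[P]_x (cst r x)%:E = r%:E.
Proof.
rewrite (_ : (fun x => _) = cst r%:E); last by apply: funext.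
by rewrite integral_cst // [X in _ * X](_ : _ = 1) ?mule1 //; apply: probability_setT.
Qed.

Lemma mEM (f g : T -> R) : measurable_fun setT f -> measurable_fun setT g ->
  measurable_fun setT (fun x => (f x)%:E * (g x)%:E).
Proof.
move=> mf mg; rewrite (_ : (fun x => _) = EFin \o (f \* g)%R).
  by apply/measurable_EFinP; exact: measurable_realfun.measurable_funM.
by apply: funext => x; rewrite /= EFinM.
Qed.

Lemma int3 (P : probability T R) (k c0 : R) (f g : T -> R) : (0 <= k)%R ->
  (forall x, 0 <= f x)%R -> (forall x, 0 <= g x)%R -> (0 <= c0)%R ->
  measurable_fun setT f -> measurable_fun setT g ->
  \int[P]_x (k * f x + g x + c0)%:E =
  k%:E * \int[P]_x (f x)%:E + \int[P]_x (g x)%:E + c0%:E.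
Proof.
move=> k0 f0 g0 c00 mf mg.
rewrite (_ : (fun x => _) = (fun x => (k%:E * (f x)%:E + (g x)%:E) + (cst c0 x)%:E)); last first.
  by apply: funext => x; rewrite !EFinD EFinM.
have mf' : measurable_fun setT (fun x => (f x)%:E) by apply/measurable_EFinP.
have mg' : measurable_fun setT (fun x => (g x)%:E) by apply/measurable_EFinP.
have mkf : measurable_fun setT (fun x => k%:E * (f x)%:E).
  exact: mEM.
have mc : measurable_fun setT (fun x : T => (cst c0 x)%:E).
  exact: (@measurable_cst _ _ _ _ setT c0%:E).
have mkfg : measurable_fun setT (fun x => k%:E * (f x)%:E + (g x)%:E).
  exact: emeasurable_funD.
rewrite ge0_integralD //; try by move=> x _; rewrite ?adde_ge0 ?mule_ge0 ?lee_fin.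
rewrite ge0_integralD //; try by move=> x _; rewrite ?adde_ge0 ?mule_ge0 ?lee_fin.
rewrite ge0_integralZl; [by rewrite int_cstP|exact: measurableT|exact: mf'|by move=> x _; rewrite lee_fin|by rewrite lee_fin].
Qed.

Lemma DV (P Q : probability T R) (l : T -> R) (a : R) :
  measurable_fun setT l -> (forall x, 0 <= l x)%R -> cgf_exists Q l a ->
  a%:E * (\int[P]_x (l x)%:E - (fine (mean Q l))%:E) <= KL P Q + (cgf Q l a)%:E.
Proof.
move=> ml l0 [intl inte].
rewrite /KL; destruct (pselect (P `<< Q)) as [PQ|nPQ]; last by rewrite addye ?leey.
have Q1 : Q setT = 1 by apply: probability_setT.
have P1 : P setT = 1 by apply: probability_setT.
set m := fine (mean Q l).
have mfin : mean Q l \is a fin_num by exact: integrable_fin_num.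
have mE : mean Q l = m%:E by rewrite fineK.
rewrite /cgf -/m.
set I := \int[Q]_x (expR (a * (l x - m)))%:E.
have Ifin : I \is a fin_num by exact: integrable_fin_num.
set c := fine I.
have IE : I = c%:E by rewrite fineK.
have mlE : measurable_fun setT (fun x => (l x)%:E) by exact/measurable_EFinP.
have c1 : (1 <= c)%R.
  rewrite -lee_fin -IE.
  have hA : (fun x => (a * (l x - m))%:E) = (fun x => a%:E * ((l x)%:E - (cst m x)%:E)).
    by apply: funext => x; rewrite EFinM EFinB.
  have icm : Q.-integrable setT (fun x => (cst m x)%:E).
    exact: finite_measure_integrable_cst.
  have iB : Q.-integrable setT (fun x => (l x)%:E - (cst m x)%:E).
    exact: integrableB.
  have iA : Q.-integrable setT (fun x => (a * (l x - m))%:E).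
    by rewrite hA; apply: integrableZl.
  have i1 : Q.-integrable setT (fun x => (cst 1%R x)%:E).
    exact: finite_measure_integrable_cst.
  have -> : 1 = \int[Q]_x ((cst 1%R x)%:E + (a * (l x - m))%:E).
    rewrite integralD //.
    have -> : \int[Q]_x (cst 1%R x)%:E = 1.
      rewrite (_ : (fun x => _) = cst 1); last by apply: funext.
      by rewrite integral_cst // [X in _ * X](_ : _ = 1) ?mule1 //; apply: probability_setT.
    rewrite hA integralZl // integralB //.
    have -> : \int[Q]_x (cst m x)%:E = m%:E.
      rewrite (_ : (fun x => _) = cst m%:E); last by apply: funext.
      by rewrite integral_cst // [X in _ * X](_ : _ = 1) ?mule1 //; apply: probability_setT.
    by rewrite -/(mean Q l) mE subee // mule0 adde0.
  apply: le_integral => //.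
    exact: integrableD.
  by move=> x _; rewrite -EFinD lee_fin; exact: expR_ge1Dx.
have c0 : (0 < c)%R by lra.
pose f0 := Radon_Nikodym_SigmaFinite.f P Q.
have f0fin := Radon_Nikodym_SigmaFinite.f_fin_num PQ.
have f00 := Radon_Nikodym_SigmaFinite.f_ge0 PQ.
have mf0 : measurable_fun setT f0.
  exact: measurable_int (Radon_Nikodym_SigmaFinite.f_integrable PQ).
pose q x := fine (f0 x).
have f0E x : f0 x = (q x)%:E by rewrite fineK.
have q0 x : (0 <= q x)%R by rewrite -lee_fin -f0E.
have mq : measurable_fun setT q.
  exact: measurableT_comp (measurable_realfun.fine_measurable measurableT) mf0.
have COV (h : T -> \bar R) : (forall x, 0 <= h x) -> measurable_fun setT h ->
   \int[Q]_x (h x * (q x)%:E) = \int[P]_x h x.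
  move=> h0 mh; rewrite -(Radon_Nikodym_SigmaFinite.change_of_variables PQ h0 measurableT mh).
  by apply: eq_integral => x _; rewrite -f0E.
have mlnq : measurable_fun setT (fun x => ln (q x)).
  exact: measurableT_comp (@measurable_realfun.measurable_ln R) mq.
have KLE : \int[P]_x (ln (fine ('d (charge_of_finite_measure P) '/d Q x)))%:E
    = \int[P]_x (ln (q x))%:E.
  apply: ae_eq_integral => //.
  - apply/measurable_EFinP; apply: measurableT_comp (@measurable_realfun.measurable_ln R) _.
    apply: measurableT_comp (measurable_realfun.fine_measurable measurableT) _.
    by [].
  - by apply/measurable_EFinP.
  - have := null_dominates_ae_eq measurableT PQ (ae_eq_Radon_Nikodym_SigmaFinite PQ measurableT).
    by apply: filterS => x /[apply] <-.
rewrite KLE.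
pose pl x := (Num.max (ln (q x)) 0)%R.
pose nl x := (Num.max (- ln (q x)) 0)%R.
have mpl : measurable_fun setT pl.
  by apply: measurable_realfun.measurable_maxr.
have mnl : measurable_fun setT nl.
  apply: measurable_realfun.measurable_maxr => //.
  exact: measurableT_comp (@oppr_measurable R setT) mlnq.
set Pp := \int[P]_x (pl x)%:E.
set N := \int[P]_x (nl x)%:E.
have KLsplit : \int[P]_x (ln (q x))%:E = Pp - N.
  rewrite integralE; congr (_ - _); apply: eq_integral => x _.
    by rewrite funeposE /pl EFin_max.
  by rewrite funenegE /nl EFin_max EFinN.
rewrite KLsplit.
have nl0 x : (0 <= nl x)%R by rewrite /nl le_max lexx orbT.
have pl0 x : (0 <= pl x)%R by rewrite /pl le_max lexx orbT.
have N1 : N <= 1.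
  rewrite /N -COV; [|by move=> x; rewrite lee_fin|by apply/measurable_EFinP].
  rewrite -(int_cstP Q 1).
  apply: ge0_le_integral => //.
  - by move=> x _; rewrite -EFinM lee_fin mulr_ge0.
  - by rewrite (_ : (fun x => _) = (fun x => (nl x * q x)%:E)); [apply/measurable_EFinP; exact: measurable_realfun.measurable_funM|apply: funext => x; rewrite EFinM].
  - by apply/measurable_EFinP; exact: measurable_cst.
  - by move=> x _; rewrite -EFinM lee_fin mulrC /nl; exact: neg_ln_bound.
have N0 : 0 <= N by apply: integral_ge0 => x _; rewrite lee_fin.
have Nfin : N \is a fin_num by rewrite ge0_fin_numE // (le_lt_trans N1) // ltey.
set L := \int[P]_x (l x)%:E.
have L0 : 0 <= L by apply: integral_ge0 => x _; rewrite lee_fin.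
pose ap := Num.max a 0%R. pose am := Num.max (- a)%R 0%R.
pose C := (- (a * m) - ln c + 1)%R.
pose Cp := Num.max C 0%R. pose Cm := Num.max (- C)%R 0%R.
have ap0 : (0 <= ap)%R by rewrite /ap le_max lexx orbT.
have am0 : (0 <= am)%R by rewrite /am le_max lexx orbT.
have Cp0 : (0 <= Cp)%R by rewrite /Cp le_max lexx orbT.
have Cm0 : (0 <= Cm)%R by rewrite /Cm le_max lexx orbT.
pose F1 x := (ap * l x + nl x + Cp)%R.
pose F2 x := (am * l x + pl x + Cm)%R.
pose G x := (expR (a * (l x - m)) / c)%R.
have F10 x : (0 <= F1 x)%R by rewrite /F1 !addr_ge0 // mulr_ge0.
have F20 x : (0 <= F2 x)%R by rewrite /F2 !addr_ge0 // mulr_ge0.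
have G0 x : (0 <= G x)%R by rewrite /G divr_ge0 ?expR_ge0 // ltW.
have mF1 : measurable_fun setT F1.
  apply: measurable_realfun.measurable_funD => //.
  apply: measurable_realfun.measurable_funD => //.
  exact: measurable_realfun.measurable_funM.
have mF2 : measurable_fun setT F2.
  apply: measurable_realfun.measurable_funD => //.
  apply: measurable_realfun.measurable_funD => //.
  exact: measurable_realfun.measurable_funM.
have mG : measurable_fun setT G.
  apply: measurable_realfun.measurable_funM => //.
  apply: measurableT_comp (@measurable_realfun.measurable_expR R) _.
  apply: measurable_realfun.measurable_funM => //.
  exact: measurable_realfun.measurable_funB.
have pw x : (F1 x * q x <= F2 x * q x + G x)%R.
  have K := @key_ineq (q x) (a * (l x - m)) c (q0 x) c0.
  have e1 : (ap * l x - am * l x = a * l x)%R by rewrite -mulrBl maxpm.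
  have e2 : (nl x - pl x = - ln (q x))%R.
    by have := maxpm (ln (q x)); rewrite /nl /pl; lra.
  have e3 : (Cp - Cm = - (a * m) - ln c + 1)%R by exact: (maxpm C).
  have D : (F1 x - F2 x = a * (l x - m) - ln (q x) - ln c + 1)%R.
    rewrite /F1 /F2 mulrBr; lra.
  rewrite -D in K.
  have -> : (F1 x * q x = F2 x * q x + q x * (F1 x - F2 x))%R by ring.
  by rewrite lerD2l.
have mEG : measurable_fun setT (fun x => (G x)%:E) by apply/measurable_EFinP.
have INT : \int[Q]_x ((F1 x)%:E * (q x)%:E) <= \int[Q]_x ((F2 x)%:E * (q x)%:E + (G x)%:E).
  apply: ge0_le_integral => //.
  - by move=> x _; rewrite -EFinM lee_fin mulr_ge0.
  - exact: mEM.
  - by apply: emeasurable_funD => //; exact: mEM.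
  - by move=> x _; rewrite -EFinM -EFinD lee_fin.
rewrite ge0_integralD in INT; try by [exact: mEM | move=> x _; rewrite ?lee_fin // -EFinM lee_fin mulr_ge0].
have IG : \int[Q]_x (G x)%:E = 1.
  rewrite (_ : (fun x => (G x)%:E) = (fun x => (c^-1)%:E * (expR (a * (l x - m)))%:E)); last first.
    by apply: funext => x; rewrite /G -EFinM mulrC.
  by rewrite integralZl // -/I IE -EFinM mulVf // gt_eqF.
rewrite IG !COV in INT; try by [move=> x; rewrite lee_fin | apply/measurable_EFinP].
rewrite /F1 /F2 in INT.
rewrite (@int3 P ap Cp l nl ap0 l0 nl0 Cp0 ml mnl) (@int3 P am Cm l pl am0 l0 pl0 Cm0 ml mpl) -/L -/N -/Pp in INT.
rewrite /=.
have eC : (Cp - Cm = - (a * m) - ln c + 1)%R by exact: (maxpm C).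
have ea : (ap - am = a)%R by exact: (maxpm a).
move: INT; rewrite -(fineK Nfin); set n := fine N => INT.
have Pp0 : 0 <= Pp by apply: integral_ge0 => x _; rewrite lee_fin.
case EP : Pp Pp0 INT => [p| |] // _ INT.
  case EL : L L0 INT => [ll| |] // _ INT.
    move: INT; do 4 rewrite -?EFinM -?EFinD -?EFinB -?EFinN; rewrite !lee_fin => INT.
    have : (ap * ll - am * ll = a * ll)%R by rewrite -mulrBl ea.
    move=> H; rewrite mulrBr; lra.
  have -> : +oo + (- m)%:E = +oo :> \bar R by [].
  have [a0|a0|a0] := ltgtP a 0%R.
  - by rewrite lt0_muley ?lte_fin // leNye.
  - have apE : ap = a by apply/max_idPl; exact: ltW.
    have amE : am = 0%R by apply/max_idPr; lra.
    rewrite apE amE mul0e gt0_muley ?lte_fin // in INT.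
  - have apE : ap = 0%R by rewrite /ap a0 maxxx.
    have amE : am = 0%R by rewrite /am a0 oppr0 maxxx.
    rewrite apE amE !mul0e in INT.
    rewrite a0 mul0e.
    move: INT; do 4 rewrite -?EFinM -?EFinD -?EFinB -?EFinN; rewrite !lee_fin => INT.
    rewrite a0 in eC; lra.
suff -> : +oo - n%:E + (ln c)%:E = +oo :> \bar R by rewrite leey.
by [].
- exact: measurableT.
- by move=> x _; rewrite -EFinM lee_fin mulr_ge0.
- exact: mEG.
Qed.

Lemma DVn (P Q : probability T R) (l : T -> R) (lam : R) :
  measurable_fun setT l -> (forall x, 0 <= l x)%R -> cgf_exists Q l (- lam)%R ->
  lam%:E * ((fine (mean Q l))%:E - \int[P]_x (l x)%:E) <= KL P Q + (cgf Q l (- lam))%:E.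
Proof.
move=> ml l0 ce; have := DV P Q l (- lam)%R ml l0 ce.
rewrite EFinN mulNe -muleN oppeB; last by rewrite fin_num_adde_defl.
by rewrite addeC.
Qed.

End DV.

Section star.
Context {R : realType}.
Local Open Scope ereal_scope.

Lemma star_lb (psi : R -> R) (b x z : \bar R) :
  (forall lam : R, (0 < lam)%R -> lam%:E < b -> lam%:E * z <= x + (psi lam)%:E) ->
  z <= psi_star_inv psi b x.
Proof.
move=> H; apply/ereal_infP => y [lam [lam0 lamb] <-].
by rewrite lee_pdivlMr // muleC; exact: H.
Qed.

Lemma star_pinfty (psi : R -> R) (b : \bar R) : psi_star_inv psi b +oo = +oo.
Proof.
apply/eqP; rewrite eq_le leey /=; apply/ereal_infP => y [lam [lam0 _] <-].
have -> : +oo + (psi lam)%:E = +oo :> \bar R by [].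
by rewrite gt0_mulye // lte_fin invr_gt0.
Qed.

Lemma sum_pinfty (n : nat) (f : 'I_n -> \bar R) (j : 'I_n) :
  (forall i, -oo < f i) -> f j = +oo -> ((n%:R)^-1)%:E * \sum_(i < n) f i = +oo.
Proof.
move=> hf fj.
have -> : \sum_(i < n) f i = +oo.
  apply/eqP; rewrite esum_eqy; first by apply/existsP; exists j; rewrite fj eqxx.
  by move=> i _; rewrite gt_eqF.
rewrite gt0_muley // lte_fin invr_gt0 ltr0n.
by case: j {fj} => k kn; exact: (leq_ltn_trans (leq0n k) kn).
Qed.

End star.


Section learning_lemmas.
Context {dO dW dZ : measure_display} {Om : measurableType dO}
  {Wt : measurableType dW} {Zt : measurableType dZ} {R : realType} {n : nat}.
Local Open Scope ereal_scope.

Lemma L0E (P : probability Om R) (mu : probability Zt R) (W : {mfun Om >-> Wt})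
  (l : Wt * Zt -> R) :
  measurable_fun setT l -> (forall p, 0 <= l p)%R ->
  \int[P]_om pop_risk mu l (W om) = \int[(distribution P W \x mu)%E]_z (l z)%:E.
Proof.
move=> ml l0.
have mf : measurable_fun setT (fun z => (l z)%:E) by apply/measurable_EFinP.
rewrite fubini_tonelli1; [|exact: mf|by move=> z; rewrite lee_fin].
rewrite ge0_integral_distribution //.
- by apply: measurable_fun_fubini_tonelli_F => // z; rewrite lee_fin.
- by move=> w; apply: integral_ge0 => z _; rewrite lee_fin.
Qed.

Lemma LiE (P : probability Om R) (W : {mfun Om >-> Wt})
  (S : {mfun Om >-> n.-tuple Zt}) (i : 'I_n) (l : Wt * Zt -> R) :
  measurable_fun setT l -> (forall p, 0 <= l p)%R ->
  \int[P]_om (l (W om, tnth (S om) i))%:E =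
  \int[distribution P (WZ_pair W S i)]_z (l z)%:E.
Proof.
move=> ml l0.
rewrite ge0_integral_distribution //; try by [apply/measurable_EFinP | move=> z; rewrite lee_fin].
Qed.

Lemma genE (P : probability Om R) (mu : probability Zt R) (W : {mfun Om >-> Wt})
  (S : {mfun Om >-> n.-tuple Zt}) (l : Wt * Zt -> R) :
  measurable_fun setT l -> (forall p, 0 <= l p)%R ->
  \int[P]_om pop_risk mu l (W om) \is a fin_num ->
  (forall i, \int[P]_om (l (W om, tnth (S om) i))%:E \is a fin_num) ->
  gen P S W mu l = \int[P]_om pop_risk mu l (W om) -
     ((n%:R)^-1)%:E * \sum_(i < n) \int[P]_om (l (W om, tnth (S om) i))%:E.
Proof.
move=> ml l0 fin0 fini.
have mf : measurable_fun setT (fun z => (l z)%:E) by apply/measurable_EFinP.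
have mpop : measurable_fun setT (fun om => pop_risk mu l (W om)).
  have mF : measurable_fun setT (fubini_F mu (fun z => (l z)%:E)).
    by apply: measurable_fun_fubini_tonelli_F => // z; rewrite lee_fin.
  exact: measurableT_comp mF (measurable_funPT W).
have pop0 om : 0 <= pop_risk mu l (W om).
  by apply: integral_ge0 => z _; rewrite lee_fin.
have mli i : measurable_fun setT (fun om => (l (W om, tnth (S om) i))%:E).
  apply/measurable_EFinP; exact: measurableT_comp ml (WZ_pair_measurable W S i).
have empE : (fun om => (emp_risk l (W om) (S om))%:E) =
    (fun om => ((n%:R)^-1)%:E * \sum_(i < n) (l (W om, tnth (S om) i))%:E).
  by apply: funext => om; rewrite /emp_risk EFinM sumEFin.
have n0 : (0 <= (n%:R)^-1 :> R)%R by rewrite invr_ge0.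
have intE : \int[P]_om (emp_risk l (W om) (S om))%:E =
    ((n%:R)^-1)%:E * \sum_(i < n) \int[P]_om (l (W om, tnth (S om) i))%:E.
  rewrite empE ge0_integralZl; last 4 first.
  - exact: measurableT.
  - by apply: emeasurable_sum => i; exact: mli.
  - by move=> om _; apply: sume_ge0 => i _; rewrite lee_fin.
  - by rewrite lee_fin.
  by rewrite ge0_integral_sum // => i om _; rewrite lee_fin.
rewrite /gen integralB //.
- by rewrite intE.
- apply/integrableP; split => //.
  under eq_integral do rewrite gee0_abs //.
  by rewrite -ge0_fin_numE // integral_ge0.
- apply/integrableP; split.
    apply/measurable_EFinP; rewrite /emp_risk.
    apply: measurable_realfun.measurable_funM => //.
    by apply: measurable_sum => i; exact: measurableT_comp ml (WZ_pair_measurable W S i).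
  under eq_integral do rewrite gee0_abs ?lee_fin ?mulr_ge0 ?sumr_ge0 //.
  rewrite intE -ge0_fin_numE.
    rewrite fin_numM // sum_fin_num; apply/allP => x /mapP[i _ ->]; exact: fini.
  by rewrite mule_ge0 ?lee_fin // sume_ge0 // => i _; apply: integral_ge0 => om _; rewrite lee_fin.
Qed.

End learning_lemmas.

Section helpers.
Context {R : realType}.
Local Open Scope ereal_scope.
Lemma hNy1 (x : \bar R) (r : R) : 0 <= x -> -oo < x - r%:E.
Proof. by case: x => [x'| |] //= _; rewrite -EFinB ltNyr. Qed.
Lemma hNy3 (x y : \bar R) : -oo < x -> -oo < y -> -oo < x + y.
Proof. by case: x => [x'| |] //; case: y => [y'| |] //= _ _; rewrite -EFinD ltNyr. Qed.
Lemma hy4 (x y : \bar R) : x = +oo -> -oo < y -> x + y = +oo.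
Proof. by move=> ->; case: y. Qed.
Lemma hy5 (x y : \bar R) : y = +oo -> -oo < x -> x + y = +oo.
Proof. by move=> ->; case: x. Qed.
Lemma hy6 (x : \bar R) : +oo <= x -> x = +oo.
Proof. by rewrite leye_eq => /eqP. Qed.
Local Open Scope ring_scope.
Lemma avg_eq1 (n : nat) (r0 : R) (m r : 'I_n -> R) : (0 < n)%N ->
  n%:R^-1 * \sum_(i < n) ((r0 - m i) + (m i - r i)) = r0 - n%:R^-1 * \sum_(i < n) r i.
Proof.
move=> n0; rewrite (eq_bigr (fun i => r0 - r i)); last by move=> i _; ring.
rewrite sumrB sumr_const card_ord -mulr_natr.
by field; rewrite pnatr_eq0 -lt0n n0.
Qed.
Lemma avg_eq2 (n : nat) (r0 : R) (m r : 'I_n -> R) : (0 < n)%N ->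
  n%:R^-1 * \sum_(i < n) ((m i - r0) + (r i - m i)) = n%:R^-1 * \sum_(i < n) r i - r0.
Proof.
move=> n0; rewrite (eq_bigr (fun i => r i - r0)); last by move=> i _; ring.
rewrite sumrB sumr_const card_ord -mulr_natr.
by field; rewrite pnatr_eq0 -lt0n n0.
Qed.
End helpers.

Theorem theorem1 (R : realType) (dO dW dZ : measure_display)
  (Om : measurableType dO) (Wt : measurableType dW) (Zt : measurableType dZ)
  (n : nat) (P : probability Om R) (mu : probability Zt R)
  (S : {mfun Om >-> n.-tuple Zt}) (W : {mfun Om >-> Wt})
  (K : R.-pker (n.-tuple Zt) ~> Wt) (l : Wt * Zt -> R)
  (hatP : 'I_n -> probability (Wt * Zt)%type R)
  (psip psim : R -> R) (bp : R) (bm : \bar R) :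
  (0 < n)%N ->
  iid_sample P S mu ->
  algorithm_kernel P S W K ->
  measurable_fun [set: Wt * Zt] l -> (forall p, 0 <= l p) ->
  0 < bp -> (bm < 0)%E ->
  (forall i lam, 0 <= lam < bp ->
     cgf_exists (hatP i) l lam /\ cgf (hatP i) l lam <= psip lam) ->
  (forall i lam, (bm < lam%:E)%E -> lam <= 0 ->
     cgf_exists (hatP i) l lam /\ cgf (hatP i) l lam <= psim (- lam)) ->
  convex_on_0b psip bp%:E -> convex_on_0b psim (- bm)%E ->
  psim 0 = 0 -> psip 0 = 0 -> deriv0_zero psip -> deriv0_zero psim ->
  let A i := KL (distribution P W \x mu)%E (hatP i) in
  let B i := KL (distribution P (WZ_pair W S i)) (hatP i) in
  (gen P S W mu l <= (n%:R^-1)%:E *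
     \sum_(i < n) (psi_star_inv psip bp%:E (A i) + psi_star_inv psim (- bm) (B i)))%E /\
  (- gen P S W mu l <= (n%:R^-1)%:E *
     \sum_(i < n) (psi_star_inv psim (- bm) (A i) + psi_star_inv psip bp%:E (B i)))%E.
Proof.
move=> n0 _ _ ml l0 bp0 bm0 hp hm _ _ _ _ _ _ A B.
set L0 := (\int[(distribution P W \x mu)%E]_z (l z)%:E)%E.
pose Li i := (\int[distribution P (WZ_pair W S i)]_z (l z)%:E)%E.
pose m i := fine (mean (hatP i) l).
have L00 : (0 <= L0)%E by apply: integral_ge0 => z _; rewrite lee_fin.
have Li0 i : (0 <= Li i)%E by apply: integral_ge0 => z _; rewrite lee_fin.
have Da i lam : 0 < lam -> (lam%:E < bp%:E)%E ->
    (lam%:E * (L0 - (m i)%:E) <= A i + (psip lam)%:E)%E.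
  move=> lam0; rewrite lte_fin => lamb.
  have [ce cb] := hp i lam (ltac:(by rewrite ltW //= lamb)).
  apply: le_trans (DV (distribution P W \x mu)%E (hatP i) l lam ml l0 ce) _.
  by rewrite leeD2l // lee_fin.
have Dd i lam : 0 < lam -> (lam%:E < bp%:E)%E ->
    (lam%:E * (Li i - (m i)%:E) <= B i + (psip lam)%:E)%E.
  move=> lam0; rewrite lte_fin => lamb.
  have [ce cb] := hp i lam (ltac:(by rewrite ltW //= lamb)).
  apply: le_trans (DV (distribution P (WZ_pair W S i)) (hatP i) l lam ml l0 ce) _.
  by rewrite leeD2l // lee_fin.
have Dc i lam : 0 < lam -> (lam%:E < - bm)%E ->
    (lam%:E * ((m i)%:E - L0) <= A i + (psim lam)%:E)%E.
  move=> lam0 lamb.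
  have h1 : (bm < (- lam)%:E)%E by rewrite EFinN -lteNr.
  have [ce cb] := hm i (- lam) h1 (ltac:(by rewrite oppr_le0 ltW)).
  apply: le_trans (DVn (distribution P W \x mu)%E (hatP i) l lam ml l0 ce) _.
  by rewrite leeD2l // lee_fin; rewrite opprK in cb.
have Db i lam : 0 < lam -> (lam%:E < - bm)%E ->
    (lam%:E * ((m i)%:E - Li i) <= B i + (psim lam)%:E)%E.
  move=> lam0 lamb.
  have h1 : (bm < (- lam)%:E)%E by rewrite EFinN -lteNr.
  have [ce cb] := hm i (- lam) h1 (ltac:(by rewrite oppr_le0 ltW)).
  apply: le_trans (DVn (distribution P (WZ_pair W S i)) (hatP i) l lam ml l0 ce) _.
  by rewrite leeD2l // lee_fin; rewrite opprK in cb.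
have hX i : (L0 - (m i)%:E <= psi_star_inv psip bp%:E (A i))%E.
  by apply: star_lb => lam; exact: Da.
have hY i : ((m i)%:E - Li i <= psi_star_inv psim (- bm) (B i))%E.
  by apply: star_lb => lam; exact: Db.
have hX' i : ((m i)%:E - L0 <= psi_star_inv psim (- bm) (A i))%E.
  by apply: star_lb => lam; exact: Dc.
have hY' i : (Li i - (m i)%:E <= psi_star_inv psip bp%:E (B i))%E.
  by apply: star_lb => lam; exact: Dd.
have bp2 : 0 < bp / 2 by rewrite divr_gt0.
have bp2b : ((bp / 2)%:E < bp%:E)%E by rewrite lte_fin; lra.
have hBinf i : Li i = +oo%E -> B i = +oo%E.
  move=> E; have := Dd i _ bp2 bp2b; rewrite E.
  rewrite (_ : (+oo - (m i)%:E = +oo)%E) // gt0_muley ?lte_fin //.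
  by move/hy6; case: (B i).
have hAinf i : L0 = +oo%E -> A i = +oo%E.
  move=> E; have := Da i _ bp2 bp2b; rewrite E.
  rewrite (_ : (+oo - (m i)%:E = +oo)%E) // gt0_muley ?lte_fin //.
  by move/hy6; case: (A i).
have LE0 : (\int[P]_om pop_risk mu l (W om) = L0)%E by exact: L0E.
have LEi i : (\int[P]_om (l (W om, tnth (S om) i))%:E = Li i)%E by exact: LiE.
have ninv0 : 0 < (n%:R)^-1 :> R by rewrite invr_gt0 ltr0n.
have [inf|[fin0 fini]] : (L0 = +oo \/ exists j, Li j = +oo)%E \/
    (L0 \is a fin_num /\ forall i, Li i \is a fin_num).
  case: (pselect (exists j, Li j = +oo%E)) => [h|h]; first by left; right.
  case E0 : L0 L00 => [r| |] // _; [right; split => // i | by left; left].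
  have := Li0 i; case Ei : (Li i) => [r'| |] // _.
  by exfalso; apply: h; exists i.
- split.
  + have tX i : (-oo < psi_star_inv psip bp%:E (A i))%E.
      by apply: lt_le_trans (hX i); exact: hNy1.
    have tY i : (-oo < psi_star_inv psim (- bm) (B i))%E.
      case Ei : (Li i) (hY i) (Li0 i) => [r| |] // h _.
        by apply: lt_le_trans h; rewrite -EFinB ltNyr.
      by rewrite (hBinf i Ei) star_pinfty.
    have [j Ej] : exists j : 'I_n,
        (psi_star_inv psip bp%:E (A j) + psi_star_inv psim (- bm) (B j) = +oo)%E.
      case: inf => [E0|[j Ej]].
        exists (Ordinal n0); apply: hy4 (tY _); apply: hy6.
        by move: (hX (Ordinal n0)); rewrite E0.
      by exists j; apply: hy5 (tX _); rewrite (hBinf j Ej) star_pinfty.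
    by rewrite (@sum_pinfty R n _ j) ?leey // => i; exact: hNy3.
  + have tX i : (-oo < psi_star_inv psim (- bm) (A i))%E.
      case E0 : L0 (hX' i) L00 => [r| |] // h _.
        by apply: lt_le_trans h; rewrite -EFinB ltNyr.
      by rewrite (hAinf i E0) star_pinfty.
    have tY i : (-oo < psi_star_inv psip bp%:E (B i))%E.
      by apply: lt_le_trans (hY' i); exact: hNy1.
    have [j Ej] : exists j : 'I_n,
        (psi_star_inv psim (- bm) (A j) + psi_star_inv psip bp%:E (B j) = +oo)%E.
      case: inf => [E0|[j Ej]].
        by exists (Ordinal n0); apply: hy4 (tY _); rewrite (hAinf _ E0) star_pinfty.
      exists j; apply: hy5 (tX _); apply: hy6.
      by move: (hY' j); rewrite Ej.
    by rewrite (@sum_pinfty R n _ j) ?leey // => i; exact: hNy3.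
have Hg := genE P mu W S l ml l0 (ltac:(by rewrite LE0)) (ltac:(by move=> i; rewrite LEi)).
rewrite LE0 (eq_bigr _ (fun i _ => LEi i)) in Hg.
set r0 := fine L0.
have L0E : L0 = r0%:E by rewrite fineK.
have LiE' i : Li i = (fine (Li i))%:E by rewrite fineK.
rewrite L0E (eq_bigr _ (fun i _ => LiE' i)) sumEFin -EFinM -EFinB in Hg.
split.
  rewrite Hg; apply: le_trans (_ : (((n%:R^-1)%:E * \sum_(i < n) ((r0 - m i) + (m i - fine (Li i)))%:E) <= _)%E).
    by rewrite sumEFin -EFinM lee_fin avg_eq1.
  apply: lee_wpmul2l; first by rewrite lee_fin ltW.
  apply: lee_sum => i _; rewrite EFinD; apply: leeD.
    by rewrite EFinB -L0E; exact: hX.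
  by rewrite EFinB -LiE'; exact: hY.
rewrite Hg -EFinN opprB; apply: le_trans (_ : (((n%:R^-1)%:E * \sum_(i < n) ((m i - r0) + (fine (Li i) - m i))%:E) <= _)%E).
  by rewrite sumEFin -EFinM lee_fin avg_eq2.
apply: lee_wpmul2l; first by rewrite lee_fin ltW.
apply: lee_sum => i _; rewrite EFinD; apply: leeD.
  by rewrite EFinB -L0E; exact: hX'.
by rewrite EFinB -LiE'; exact: hY'.
Qed.
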